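(* Let $A$ be a lattice with finite generating set $X$, let $P$ be a finite partial lattice, $n\in\mathbb N$, $S:=P^{(\vee\wedge)^n\vee}$, and let $g\colon A\to F(P)$ be a lattice homomorphism. Assume that the sublattice $g(A)$ satisfies Dean's condition (D) for the generating set $g(X)$ and that $g(X)\subseteq S$. Then $g$ is lower bounded if and only if the composition $f\circ g\colon A\to(S,\inf,\vee)$ with the standard homomorphism $f$ is lower bounded.
   Context: A partial lattice $P$ is a set with partially defined finite joins and meets; $F(P)$ is the lattice freely generated by $P$ (generated by $P$, and every map from $P$ into a lattice preserving the defined joins and meets extends uniquely to a homomorphism on $F(P)$). For $W\subseteq F(P)$ let $W^\vee:=\{\bigvee U: U\subseteq W\text{ finite}\}$ and $W^\wedge:=\{\bigwedge U:U\subseteq W\text{ finite}\}$, computed in $F(P)$, with $\bigvee\emptyset:=\bigwedge P$; $P^{(\vee\wedge)^n\vee}$ is obtained from $P$ by applying $(\cdot)^\vee$ then $(\cdot)^\wedge$, $n$ times, followed by one more $(\cdot)^\vee$. $S$ is a finite join-subsemilattice of $F(P)$ with least element $\bigwedge P$, so any $a,b\in S$ have an infimum $\inf(a,b)$ in $S$, and $(S,\inf,\vee)$ is a finite lattice. The standard homomorphism is $f\colon F(P)\to S$, $f(d)=\bigvee\{w\in S: w\le d\}$; it is known to be a lower bounded lattice epimorphism onto $(S,\inf,\vee)$ with $f(d)=d$ for $d\in S$. A lattice homomorphism $g\colon A\to L$ is lower bounded if for every $d\in L$ the set $\{x\in A: g(x)\ge d\}$ is empty or has a least element. Dean's condition (D)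 for a lattice $D$ with finite generating set $Q$: for all finite $S',T\subseteq D$ with $\bigwedge S'\le\bigvee T$, either some $s\in S'$ has $s\le\bigvee T$, or some $t\in T$ has $\bigwedge S'\le t$, or some $q\in Q$ has $\bigwedge S'\le q\le\bigvee T$. *)

(* Defs.v *)
From HB Require Import structures.
From mathcomp Require Import all_boot all_order.
From Stdlib Require Import ClassicalEpsilon.
Set Implicit Arguments. Unset Strict Implicit. Unset Printing Implicit Defensive.
Import Order.Theory.
Local Open Scope order_scope.

Definition bigjoin1 {d} {L : latticeType d} (x : L) (s : seq L) : L :=
  foldl (@Order.join d L) x s.
Definition bigmeet1 {d} {L : latticeType d} (x : L) (s : seq L) : L :=
  foldl (@Order.meet d L) x s.

Definition lattice_hom {d1 d2} {L1 : latticeType d1} {L2 : latticeType d2}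
  (h : L1 -> L2) : Prop :=
  (forall x y, h (x `&` y) = h x `&` h y) /\ (forall x y, h (x `|` y) = h x `|` h y).

Inductive lterm (V : Type) : Type :=
  | LVar of V
  | LJoin of lterm V & lterm V
  | LMeet of lterm V & lterm V.

Fixpoint leval {V : Type} {d} {L : latticeType d} (v : V -> L) (t : lterm V) : L :=
  match t with
  | LVar x => v x
  | LJoin t1 t2 => leval v t1 `|` leval v t2
  | LMeet t1 t2 => leval v t1 `&` leval v t2
  end.

Definition generated_by {V : Type} {d} {L : latticeType d} (v : V -> L) : Prop :=
  forall x : L, exists t : lterm V, leval v t = x.

Definition generates {d} {L : latticeType d} (X : seq L) : Prop :=
  generated_by (fun y : seq_sub X => ssval y).

(* A finite partial lattice: a finite poset P together with the partially
   defined joins and meets.  [pj H p] means "the join of the finite set H is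
   defined and equals p", [pm H p] likewise for meets. *)
Definition partial_lattice {dP} {P : finPOrderType dP}
  (pj pm : {set P} -> P -> bool) : Prop :=
  [/\ (forall H p, pj H p -> [/\ H != set0,
          (forall h, h \in H -> h <= p) &
          (forall u, (forall h, h \in H -> h <= u) -> p <= u)]),
      (forall H p, pm H p -> [/\ H != set0,
          (forall h, h \in H -> p <= h) &
          (forall u, (forall h, h \in H -> u <= h) -> u <= p)]) &
      (forall a b : P, a <= b -> pj [set a; b] b /\ pm [set a; b] a)].

Definition preserves_partial {dP} {P : finPOrderType dP}
  (pj pm : {set P} -> P -> bool) {d} {L : latticeType d} (h : P -> L) : Prop :=
  (forall H p x0, pj H p -> x0 \in H -> h p = bigjoin1 (h x0) (map h (enum H))) /\
  (forall H p x0, pm H p -> x0 \in H -> h p = bigmeet1 (h x0) (map h (enum H))).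

Definition freely_generated {dP} {P : finPOrderType dP}
  (pj pm : {set P} -> P -> bool) {dF} {F : latticeType dF} (iota : P -> F) : Prop :=
  [/\ preserves_partial pj pm iota,
      generated_by iota &
      forall d' (M : latticeType d') (h : P -> M), preserves_partial pj pm h ->
        exists k : F -> M, [/\ lattice_hom k, (forall p, k (iota p) = h p) &
          forall k' : F -> M, lattice_hom k' -> (forall p, k' (iota p) = h p) ->
            forall x, k' x = k x]].

Section Closures.
Context {dF} {F : latticeType dF}.

(* W^\/ , with the join of the empty set being [bot] (:= /\ P) *)
Definition join_clos (bot : F) (W : F -> Prop) : F -> Prop :=
  fun x => exists U : seq F, (forall u, u \in U -> W u) /\
    x = match U with [::] => bot | u :: U' => bigjoin1 u U' end.

Definition meet_clos (W : F -> Prop) : F -> Prop :=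
  fun x => exists (u : F) (U : seq F), (forall v, v \in u :: U -> W v) /\
    x = bigmeet1 u U.

End Closures.

(* /\ P computed in F (p0 witnesses that P is nonempty) *)
Definition meetP {dP} {P : finPOrderType dP} {dF} {F : latticeType dF}
  (iota : P -> F) (p0 : P) : F := bigmeet1 (iota p0) (map iota (enum P)).

Definition Sset {dP} {P : finPOrderType dP} {dF} {F : latticeType dF}
  (iota : P -> F) (p0 : P) (n : nat) : F -> Prop :=
  join_clos (meetP iota p0)
    (iter n (fun W => meet_clos (join_clos (meetP iota p0) W))
       (fun x => exists p, x = iota p)).

(* the standard homomorphism f : F -> S, f d = \/ {w in S : w <= d}
   (the join of the finite set {w in S | w <= d}, empty join = /\ P) *)
Definition stdhom {dP} {P : finPOrderType dP} {dF} {F : latticeType dF}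
  (iota : P -> F) (p0 : P) (n : nat) (x : F) : F :=
  epsilon (inhabits (meetP iota p0)) (fun y => exists U : seq F,
    (forall w, w \in U <-> (Sset iota p0 n w /\ w <= x)) /\
    y = match U with [::] => meetP iota p0 | u :: U' => bigjoin1 u U' end).

Definition deanD {d} {L : latticeType d} (D : L -> Prop) (Q : seq L) : Prop :=
  forall (s0 : L) (s : seq L) (t0 : L) (t : seq L),
    (forall x, x \in s0 :: s -> D x) -> (forall y, y \in t0 :: t -> D y) ->
    bigmeet1 s0 s <= bigjoin1 t0 t ->
    [\/ exists2 x, x \in s0 :: s & x <= bigjoin1 t0 t,
        exists2 y, y \in t0 :: t & bigmeet1 s0 s <= y |
        exists2 q, q \in Q & bigmeet1 s0 s <= q <= bigjoin1 t0 t].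

Definition lower_bounded {dA} {A : latticeType dA} {d} {L : latticeType d}
  (h : A -> L) (C : L -> Prop) : Prop :=
  forall e : L, C e ->
    (forall x, ~ (e <= h x)) \/
    (exists x0, e <= h x0 /\ forall x, e <= h x -> x0 <= x).

(* Main.v *)
Require Import Defs.
From HB Require Import structures.
From mathcomp Require Import all_boot all_order.
From Stdlib Require Import Classical ClassicalEpsilon.
Import Order.Theory.
Local Open Scope order_scope.

Definition dbl_ok {d} {F : latticeType d} (s t : F) (p : F * bool) : bool :=
  if s <= p.1 then (p.1 <= t) || p.2 else ~~ p.2.

Record dbl {d} {F : latticeType d} (s t : F) := Dbl { dv : F * bool; dok : dbl_ok s t dv }.
Arguments dv {d F s t}.
Arguments Dbl {d F s t}.
Arguments dok {d F s t}.

HB.instance Definition _ d (F : latticeType d) (s t : F) := [isSub for (@dv d F s t)].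
HB.instance Definition _ d (F : latticeType d) (s t : F) := [Equality of dbl s t by <:].
HB.instance Definition _ d (F : latticeType d) (s t : F) := [Choice of dbl s t by <:].

Fact dbl_display : Order.disp_t. Proof. exact: Order.Disp tt tt. Qed.

Section DblOrd.
Context {d} {F : latticeType d} (s t : F).
Definition dle (a b : dbl s t) : bool := ((dv a).1 <= (dv b).1) && ((dv a).2 ==> (dv b).2).
Lemma dle_refl : reflexive dle.
Proof. by move=> a; rewrite /dle lexx implybb. Qed.
Lemma dle_anti : antisymmetric dle.
Proof.
move=> [[x i] hi] [[y j] hj]; rewrite /dle /= => /andP[/andP[xy ij] /andP[yx ji]].
apply/val_inj => /=; congr pair; first by apply/le_anti; rewrite xy yx.
by move: ij ji {hi hj}; case: i; case: j.
Qed.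
Lemma dle_trans : transitive dle.
Proof.
move=> b a c; rewrite /dle => /andP[h1 h2] /andP[h3 h4].
rewrite (le_trans h1 h3) /=; move: h2 h4; case: (dv a).2; case: (dv b).2; case: (dv c).2 => //.
Qed.
End DblOrd.

HB.instance Definition _ d (F : latticeType d) (s t : F) :=
  Order.Le_isPOrder.Build dbl_display (dbl s t) (@dle_refl d F s t) (@dle_anti d F s t) (@dle_trans d F s t).

Section DblLat.
Context {d} {F : latticeType d} (s t : F).

Lemma dmeet_ok (a b : dbl s t) : dbl_ok s t ((dv a).1 `&` (dv b).1, (dv a).2 && (dv b).2).
Proof.
case: a b => [[x i] hi] [[y j] hj]; rewrite /dbl_ok /= in hi hj *.
rewrite lexI; move: hi hj; case: (s <= x); case: (s <= y) => /= hi hj.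
- case/orP: hi => [xt|->]; first by rewrite leIxl.
  case/orP: hj => [yt|->]; first by rewrite leIxr.
  by rewrite orbT.
- by rewrite (negbTE hj) andbF.
- by rewrite (negbTE hi).
- by rewrite (negbTE hi).
Qed.

Definition djbit (x y : F) (i j : bool) : bool := [|| i, j | (s <= x `|` y) && ~~ (x `|` y <= t)].

Lemma djoin_ok (a b : dbl s t) :
  dbl_ok s t ((dv a).1 `|` (dv b).1, djbit (dv a).1 (dv b).1 (dv a).2 (dv b).2).
Proof.
case: a b => [[x i] hi] [[y j] hj]; rewrite /dbl_ok /djbit /= in hi hj *.
case sxy: (s <= x `|` y) => /=.
  by case: (x `|` y <= t); rewrite ?orbT.
have sx : (s <= x) = false by apply/negbTE/negP => h; move: sxy; rewrite (le_trans h (leUl _ _)).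
have sy : (s <= y) = false by apply/negbTE/negP => h; move: sxy; rewrite (le_trans h (leUr _ _)).
by rewrite sx sy in hi hj; rewrite (negbTE hi) (negbTE hj).
Qed.

Definition dmeet (a b : dbl s t) : dbl s t := Dbl _ (dmeet_ok a b).
Definition djoin (a b : dbl s t) : dbl s t := Dbl _ (djoin_ok a b).

Lemma dmeetP (x y z : dbl s t) : (x <= dmeet y z) = (x <= y) && (x <= z).
Proof.
case: x y z => [[x i] hi] [[y j] hj] [[z k] hk].
rewrite /Order.le /= /dle /= lexI; clear hi hj hk.
by case: i; case: j; case: k; case: (x <= y); case: (x <= z).
Qed.

Lemma djoinP (x y z : dbl s t) : (djoin x y <= z) = (x <= z) && (y <= z).
Proof.
case: x y z => [[x i] hi] [[y j] hj] [[z k] hk].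
rewrite /Order.le /= /dle /= leUx /djbit; clear hi hj.
case xz: (x <= z); case yz: (y <= z); rewrite /= ?andbF //.
case: k hk => hk; first by rewrite !implybT.
rewrite !implybF.
case sxy: (s <= x `|` y); last by rewrite /= orbF negb_or.
have sz : s <= z by rewrite (le_trans sxy) // leUx xz yz.
rewrite /dbl_ok /= sz orbF in hk.
by rewrite /= (le_trans _ hk) ?leUx ?xz ?yz //= orbF negb_or.
Qed.

End DblLat.

HB.instance Definition _ d (F : latticeType d) (s t : F) :=
  Order.POrder_MeetJoin_isLattice.Build dbl_display (dbl s t) (@dmeetP d F s t) (@djoinP d F s t).

Check fun d (F : latticeType d) (s t : F) => (dbl s t : latticeType _).

Section Gen.
Context {d} {L : latticeType d}.

Lemma bigjoin1_le (x : L) s z : (bigjoin1 x s <= z) = (x <= z) && all (fun y => y <= z) s.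
Proof.
elim: s x => [|y s IH] x /=; first by rewrite andbT.
by rewrite /bigjoin1 /= -/(bigjoin1 _ _) IH leUx andbA.
Qed.

Lemma le_bigmeet1 (x : L) s z : (z <= bigmeet1 x s) = (z <= x) && all (fun y => z <= y) s.
Proof.
elim: s x => [|y s IH] x /=; first by rewrite andbT.
by rewrite /bigmeet1 /= -/(bigmeet1 _ _) IH lexI andbA.
Qed.

Lemma le_bigjoin1 (x : L) s y : y \in x :: s -> y <= bigjoin1 x s.
Proof.
move: (lexx (bigjoin1 x s)); rewrite bigjoin1_le => /andP[h1 /allP h2].
by rewrite inE => /orP[/eqP->|/h2].
Qed.

Lemma bigmeet1_le (x : L) s y : y \in x :: s -> bigmeet1 x s <= y.
Proof.
move: (lexx (bigmeet1 x s)); rewrite le_bigmeet1 => /andP[h1 /allP h2].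
by rewrite inE => /orP[/eqP->|/h2].
Qed.

Lemma bigjoin1_eq (x : L) s y r : (forall z, z \in x :: s <-> z \in y :: r) ->
  bigjoin1 x s = bigjoin1 y r.
Proof.
move=> H; apply/le_anti/andP; split.
  rewrite bigjoin1_le le_bigjoin1 ?(proj1 (H x)) ?mem_head //=.
  by apply/allP => z zs; apply: le_bigjoin1; apply/H; rewrite inE zs orbT.
rewrite bigjoin1_le le_bigjoin1 ?(proj2 (H y)) ?mem_head //=.
by apply/allP => z zs; apply: le_bigjoin1; apply/H; rewrite inE zs orbT.
Qed.

Lemma bigmeet1_eq (x : L) s y r : (forall z, z \in x :: s <-> z \in y :: r) ->
  bigmeet1 x s = bigmeet1 y r.
Proof.
move=> H; apply/le_anti/andP; split.
  rewrite le_bigmeet1 bigmeet1_le ?(proj2 (H y)) ?mem_head //=.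
  by apply/allP => z zs; apply: bigmeet1_le; apply/H; rewrite inE zs orbT.
rewrite le_bigmeet1 bigmeet1_le ?(proj1 (H x)) ?mem_head //=.
by apply/allP => z zs; apply: bigmeet1_le; apply/H; rewrite inE zs orbT.
Qed.

Lemma le_bigmeet1P (x : L) s z : (forall y, y \in x :: s -> z <= y) -> z <= bigmeet1 x s.
Proof.
move=> H; rewrite le_bigmeet1 H ?mem_head //=; apply/allP => y ys.
by apply: H; rewrite inE ys orbT.
Qed.

Lemma bigmeet1_leP (x : L) s z : (exists2 y, y \in x :: s & y <= z) -> bigmeet1 x s <= z.
Proof. by case=> y ys yz; rewrite (le_trans _ yz) // bigmeet1_le. Qed.

End Gen.

Lemma hom_bigmeet1 {d1 d2} {L1 : latticeType d1} {L2 : latticeType d2} (g : L1 -> L2)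
  (x : L1) s : lattice_hom g -> g (bigmeet1 x s) = bigmeet1 (g x) (map g s).
Proof.
move=> [gm gj]; elim: s x => [|y s IH] x //=.
by rewrite /bigmeet1 /= -!/(bigmeet1 _ _) IH gm.
Qed.

Lemma hom_bigjoin1 {d1 d2} {L1 : latticeType d1} {L2 : latticeType d2} (g : L1 -> L2)
  (x : L1) s : lattice_hom g -> g (bigjoin1 x s) = bigjoin1 (g x) (map g s).
Proof.
move=> [gm gj]; elim: s x => [|y s IH] x //=.
by rewrite /bigjoin1 /= -!/(bigjoin1 _ _) IH gj.
Qed.

Lemma gen_ind {V : Type} {d} {L : latticeType d} (v : V -> L) (Q : L -> Prop) :
  generated_by v -> (forall p, Q (v p)) ->
  (forall a b, Q a -> Q b -> Q (a `|` b)) -> (forall a b, Q a -> Q b -> Q (a `&` b)) ->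
  forall x, Q x.
Proof.
move=> G H1 H2 H3 x; have [tm <-] := G x.
elim: tm => [p|t1 IH1 t2 IH2|t1 IH1 t2 IH2] /=; auto.
Qed.

Lemma hom_le {d1 d2} {L1 : latticeType d1} {L2 : latticeType d2} (g : L1 -> L2) x y :
  lattice_hom g -> x <= y -> g x <= g y.
Proof. by move=> [gm _] /meet_l <-; rewrite gm leIr. Qed.

Section Lift.
Context {d} {F : latticeType d} (s t : F).

Lemma lift_ok (x : F) : dbl_ok s t (x, (s <= x) && ~~ (x <= t)).
Proof. by rewrite /dbl_ok /=; case: (s <= x); case: (x <= t). Qed.

Definition lift (x : F) : dbl s t := Dbl _ (lift_ok x).

Lemma lift_out (a : dbl s t) : ~~ ((s <= (dv a).1) && ((dv a).1 <= t)) -> a = lift (dv a).1.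
Proof.
case: a => [[x i] hi] /= h; apply/val_inj => /=; congr pair.
rewrite /dbl_ok /= in hi; move: h hi; case: (s <= x) => /=.
  by move/negbTE->.
by case: i.
Qed.

Lemma dbl_leE (a b : dbl s t) : (a <= b) = ((dv a).1 <= (dv b).1) && ((dv a).2 ==> (dv b).2).
Proof. by []. Qed.

Lemma dv_meet (a b : dbl s t) : dv (a `&` b) = ((dv a).1 `&` (dv b).1, (dv a).2 && (dv b).2).
Proof. by []. Qed.

Lemma dv_join (a b : dbl s t) : dv (a `|` b) =
  ((dv a).1 `|` (dv b).1, djbit s t (dv a).1 (dv b).1 (dv a).2 (dv b).2).
Proof. by []. Qed.

Lemma dv_bigjoin1 (a : dbl s t) l : (dv (bigjoin1 a l)).1 = bigjoin1 (dv a).1 (map (fun b => (dv b).1) l).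
Proof. by elim: l a => [|b l IH] a //=; rewrite /bigjoin1 /= -!/(bigjoin1 _ _) IH. Qed.

Lemma dv_bigmeet1 (a : dbl s t) l : (dv (bigmeet1 a l)).1 = bigmeet1 (dv a).1 (map (fun b => (dv b).1) l).
Proof. by elim: l a => [|b l IH] a //=; rewrite /bigmeet1 /= -!/(bigmeet1 _ _) IH. Qed.

End Lift.

Lemma dean2 {dP} {P : finPOrderType dP} (pj pm : {set P} -> P -> bool)
  {dF} {F : latticeType dF} (iota : P -> F) :
  freely_generated pj pm iota -> forall s1 s2 t1 t2 : F,
  s1 `&` s2 <= t1 `|` t2 ->
  (s1 <= t1 `|` t2) \/ (s2 <= t1 `|` t2) \/ (s1 `&` s2 <= t1) \/ (s1 `&` s2 <= t2) \/
      (exists p, s1 `&` s2 <= iota p /\ iota p <= t1 `|` t2).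
Proof.
move=> [[prj prm] G U] s1 s2 t1 t2 st.
apply: NNPP => Hn.
have h1 : ~~ (s1 <= t1 `|` t2) by apply/negP => h; apply: Hn; left.
have h2 : ~~ (s2 <= t1 `|` t2) by apply/negP => h; apply: Hn; right; left.
have h3 : ~~ (s1 `&` s2 <= t1) by apply/negP => h; apply: Hn; right; right; left.
have h4 : ~~ (s1 `&` s2 <= t2) by apply/negP => h; apply: Hn; right; right; right; left.
have h5 : forall p, ~~ ((s1 `&` s2 <= iota p) && (iota p <= t1 `|` t2)).
  by move=> p; apply/negP => /andP[a b]; apply: Hn; right; right; right; right; exists p.
set s := s1 `&` s2 in st h3 h4 h5; set t := t1 `|` t2 in st h1 h2 h5.
pose h := fun p => lift s t (iota p).
have ph : preserves_partial pj pm h.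
  have mh : forall l, map (fun b => (dv b).1) (map h l) = map iota l.
    by move=> l; rewrite -map_comp.
  split.
  - move=> H p x0 Hp Hx; rewrite [RHS]lift_out dv_bigjoin1 mh /= -(prj H p x0 Hp Hx) //.
  - move=> H p x0 Hp Hx; rewrite [RHS]lift_out dv_bigmeet1 mh /= -(prm H p x0 Hp Hx) //.
have [k [[km kj] kp _]] := U _ _ h ph.
have kid : forall x, (dv (k x)).1 = x.
  apply: (@gen_ind _ _ _ iota (fun x => (dv (k x)).1 = x) G).
  - by move=> p; rewrite kp.
  - by move=> a b Ha Hb; rewrite kj dv_join /= Ha Hb.
  - by move=> a b Ha Hb; rewrite km dv_meet /= Ha Hb.
have kout : forall x, ~~ ((s <= x) && (x <= t)) -> k x = lift s t x.
  by move=> x hx; rewrite (@lift_out _ _ s t (k x)) kid // kid.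
have e1 : (dv (k s1)).2 = true.
  by rewrite kout /= ?leIl ?(negbTE h1) //= andbF.
have e2 : (dv (k s2)).2 = true.
  by rewrite kout /= ?leIr ?(negbTE h2) //= andbF.
have e3 : (dv (k t1)).2 = false.
  by rewrite kout /= ?(negbTE h3).
have e4 : (dv (k t2)).2 = false.
  by rewrite kout /= ?(negbTE h4).
have : k s <= k t by apply: (@hom_le _ _ _ _ k) => //; split.
rewrite /s /t km kj dbl_leE dv_meet dv_join /= e1 e2 e3 e4 /djbit /=.
by rewrite !kid => /and3P[_ _]; rewrite lexx.
Qed.

Fixpoint subs {T : Type} (l : seq T) : seq (seq T) :=
  match l with [::] => [:: [::]] | x :: l' => subs l' ++ map (cons x) (subs l') end.

Lemma filter_subs {T : eqType} (p : pred T) (l : seq T) : filter p l \in subs l.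
Proof.
elim: l => //= x l IH; rewrite mem_cat; case: (p x).
  by rewrite map_f ?orbT.
by rewrite IH.
Qed.

Definition asb (P : Prop) : bool := if excluded_middle_informative P then true else false.
Lemma asbP (P : Prop) : asb P <-> P.
Proof. by rewrite /asb; case: excluded_middle_informative. Qed.

Section Fin.
Context {dF} {F : latticeType dF}.
Definition finiteP (W : F -> Prop) := exists L : seq F, forall x, W x -> x \in L.

Definition jv (bot : F) (V : seq F) : F := match V with [::] => bot | v :: V' => bigjoin1 v V' end.

Lemma jv_filter bot (U L : seq F) : (forall u, u \in U -> u \in L) ->
  jv bot U = jv bot (filter (fun y => y \in U) L).
Proof.
case: U => [|u U] HU.
  by have -> : filter (fun y => y \in [::]) L = [::] by clear HU; elim: L.
have : u \in filter (fun y => y \in u :: U) L by rewrite mem_filter mem_head HU ?mem_head.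
case E: (filter _ L) => [//|v V] _ /=; apply: bigjoin1_eq => z.
rewrite -E mem_filter; split; first by move=> h; rewrite h HU.
by case/andP.
Qed.

Lemma fin_join bot W : finiteP W -> finiteP (join_clos bot W).
Proof.
move=> [L HL]; exists (map (jv bot) (subs L)) => x [U [HU ->]].
rewrite -/(jv bot U) (@jv_filter bot U L); first by rewrite map_f ?filter_subs.
by move=> u /HU /HL.
Qed.

Definition mvo (V : seq F) : option F := match V with [::] => None | v :: V' => Some (bigmeet1 v V') end.

Lemma fin_meet W : finiteP W -> finiteP (meet_clos W).
Proof.
move=> [L HL]; exists (pmap mvo (subs L)) => x [u [U [HU ->]]].
rewrite mem_pmap.
have : u \in filter (fun y => y \in u :: U) L by rewrite mem_filter mem_head; apply: HL; apply: HU; rewrite mem_head.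
case E: (filter _ L) => [//|v V] _.
have <- : mvo (v :: V) = Some (bigmeet1 u U).
  rewrite /= (@bigmeet1_eq _ _ v V u U) // => z.
  rewrite -E mem_filter; split; last by move=> h; rewrite h /=; apply: HL; apply: HU.
  by case/andP.
by rewrite map_f // -E filter_subs.
Qed.
End Fin.

Section SFacts.
Context {dP} {P : finPOrderType dP} {dF} {F : latticeType dF} (iota : P -> F) (p0 : P) (n : nat).

Definition Wk k : F -> Prop := iter k (fun W => meet_clos (join_clos (meetP iota p0) W))
       (fun x => exists p, x = iota p).

Lemma Sset_fin : finiteP (Sset iota p0 n).
Proof.
apply: fin_join; rewrite -/(Wk n); elim: n => [|k IH].
  exists (map iota (enum P)) => x [p ->]; by rewrite map_f ?mem_enum.
by rewrite /Wk /= -/(Wk k); apply/fin_meet/fin_join.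
Qed.

Lemma Wk_iota k p : Wk k (iota p).
Proof.
elim: k => [|k IH]; first by exists p.
rewrite /Wk /= -/(Wk k); exists (iota p), [::]; split => //.
move=> v; rewrite mem_seq1 => /eqP ->; exists [:: iota p]; split => //.
by move=> u; rewrite mem_seq1 => /eqP ->.
Qed.

Lemma Sset_iota p : Sset iota p0 n (iota p).
Proof. by exists [:: iota p]; split => // u; rewrite mem_seq1 => /eqP ->; apply: Wk_iota. Qed.

Lemma meetP_le : generated_by iota -> forall x, meetP iota p0 <= x.
Proof.
move=> G; apply: (@gen_ind _ _ _ iota (fun x => meetP iota p0 <= x) G).
- by move=> p; apply: bigmeet1_le; rewrite inE map_f ?mem_enum ?orbT.
- by move=> a b Ha _; apply: lexUl.
- by move=> a b Ha Hb; rewrite lexI Ha Hb.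
Qed.

Lemma stdhom_spec x : exists U, (forall w, w \in U <-> (Sset iota p0 n w /\ w <= x)) /\
  stdhom iota p0 n x = jv (meetP iota p0) U.
Proof.
pose Q := fun y => exists U : seq F,
    (forall w, w \in U <-> (Sset iota p0 n w /\ w <= x)) /\
    y = match U with [::] => meetP iota p0 | u :: U' => bigjoin1 u U' end.
have : Q (stdhom iota p0 n x).
  apply: epsilon_spec; have [L HL] := Sset_fin.
  exists (jv (meetP iota p0) (filter (fun w => asb (Sset iota p0 n w /\ w <= x)) L)).
  exists (filter (fun w => asb (Sset iota p0 n w /\ w <= x)) L); split => // w.
  rewrite mem_filter; split; first by case/andP => /asbP.
  by move=> h; rewrite (proj2 (asbP _) h) HL //; case: h.
by [].
Qed.

Lemma stdhom_iff : generated_by iota -> forall e x, Sset iota p0 n e ->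
  (e <= stdhom iota p0 n x) <-> (e <= x).
Proof.
move=> G e x Se; have [U [HU ->]] := stdhom_spec x; split => h.
  apply: le_trans h _; case: U HU => [|u U] HU /=; first by apply: meetP_le.
  rewrite bigjoin1_le (proj1 (HU u) (mem_head _ _)).2 /=; apply/allP => w wU.
  by case: (proj1 (HU w)); rewrite // inE wU orbT.
have : e \in U by apply/HU.
case: U HU => [//|u U] HU eU /=; exact: le_bigjoin1.
Qed.
End SFacts.

Lemma mC_le {d} {L : latticeType d} (C : seq L) (d0 c x : L) : c \in C -> c <= x ->
  (match C with [::] => d0 | c :: C' => bigmeet1 c C' end) <= x.
Proof. by case: C => [//|c0 C'] cC cx; apply: bigmeet1_leP; exists c. Qed.

Lemma mC_ge {d1 d2} {L1 : latticeType d1} {L2 : latticeType d2} (g : L1 -> L2)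
  (C : seq L1) (d0 : L1) (z : L2) : lattice_hom g ->
  (forall c, c \in C -> z <= g c) -> z <= g d0 ->
  z <= g (match C with [::] => d0 | c :: C' => bigmeet1 c C' end).
Proof.
move=> gh; case: C => [//|c C'] H _.
by rewrite (hom_bigmeet1 g c C' gh); apply: le_bigmeet1P => y; rewrite -[g c :: _]/(map g (c :: C')) => /mapP[c' c'in ->]; apply: H.
Qed.

Theorem mainTheorem14
  (dA : Order.disp_t) (A : latticeType dA) (X : seq A)
  (dP : Order.disp_t) (P : finPOrderType dP) (pj pm : {set P} -> P -> bool)
  (dF : Order.disp_t) (F : latticeType dF) (iota : P -> F)
  (p0 : P) (n : nat) (g : A -> F) :
  generates X ->
  partial_lattice pj pm ->
  freely_generated pj pm iota ->
  lattice_hom g ->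
  deanD (fun y => exists x, y = g x) (map g X) ->
  (forall x, x \in X -> Sset iota p0 n (g x)) ->
  lower_bounded g (fun _ => True) <->
  lower_bounded (fun x => stdhom iota p0 n (g x)) (Sset iota p0 n).
Proof.
move=> GA _ free ghom _ HX.
have G : generated_by iota by case: free.
have [gm gj] := ghom.
have siff := @stdhom_iff _ _ _ _ iota p0 n G.
split.
  move=> LB e Se; case: (LB e I) => [Hn|[x0 [h1 h2]]].
    by left => x /(siff _ _ Se); apply: Hn.
  right; exists x0; split; first by apply/siff.
  by move=> x /(siff _ _ Se); apply: h2.
move=> LB.
pose lbat e := (forall x, ~ (e <= g x)) \/
    (exists x0, e <= g x0 /\ forall x, e <= g x -> x0 <= x).
have LS : forall e, Sset iota p0 n e -> lbat e.
  move=> e Se; case: (LB e Se) => [Hn|[x0 [h1 h2]]].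
    by left => x /(siff _ _ Se); apply: Hn.
  right; exists x0; split; first by apply/siff.
  by move=> x /(siff _ _ Se); apply: h2.
suff main : forall e, lbat e by move=> e _; apply: main.
apply: (@gen_ind _ _ _ iota lbat G).
- by move=> p; apply: LS; apply: Sset_iota.
- move=> a b [Ha|[ca [hca1 hca2]]].
    by move=> _; left => x h; apply: (Ha x); apply: le_trans h; apply: leUl.
  move=> [Hb|[cb [hcb1 hcb2]]].
    by left => x h; apply: (Hb x); apply: le_trans h; apply: leUr.
  right; exists (ca `|` cb); split; first by rewrite gj leU2.
  by move=> x; rewrite leUx => /andP[h1 h2]; rewrite leUx hca2 ?hcb2.
move=> a b IHa IHb.
set e := a `&` b.
case: (classic (exists x, e <= g x)) => [[x1 hx1]|Hn]; last first.
  by left => x h; apply: Hn; exists x.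
right.
pose least y c := y <= g c /\ forall x, y <= g x -> c <= x.
pose R y := (y = a \/ y = b \/ e <= y) /\ exists c, least y c.
pose bf y := epsilon (inhabits x1) (least y).
have bfP : forall y, R y -> least y (bf y).
  by move=> y [_ Hy]; apply: epsilon_spec.
pose Ys := filter (fun y => asb (R y)) ([:: a; b] ++ map iota (enum P) ++ map g X).
pose C := map bf Ys.
pose mC := match C with [::] => x1 | c :: C' => bigmeet1 c C' end.
have HC1 : forall c, c \in C -> e <= g c.
  move=> c /mapP[y]; rewrite mem_filter => /andP[/asbP Ry _] ->.
  have [h1 _] := bfP y Ry; apply: le_trans h1.
  case: Ry => [[->|[->|//]] _]; [exact: leIl | exact: leIr].
have helper : forall c x, c \in C -> c <= x -> mC <= x.
  by move=> c x; apply: mC_le.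
have helper2 : forall y x, y \in [:: a; b] ++ map iota (enum P) ++ map g X ->
    R y -> y <= g x -> mC <= x.
  move=> y x yin Ry yx; apply: (helper (bf y)).
    by apply: map_f; rewrite mem_filter yin andbT; apply/asbP.
  by apply: (proj2 (bfP y Ry)).
have least_of : forall y x, lbat y -> y <= g x -> exists c, least y c.
  move=> y x [Hy|[c Hc]] yx; first by case: (Hy x).
  by exists c.
have Key : forall x, e <= g x -> mC <= x.
  apply: (@gen_ind _ _ _ (fun y : seq_sub X => ssval y)
    (fun x => e <= g x -> mC <= x) GA).
  - move=> q ex.
    have Sq := HX _ (ssvalP q).
    apply: (helper2 (g (ssval q))) => //.
      by rewrite !mem_cat map_f ?orbT // ssvalP.
    split; first by right; right.
    exact: (least_of _ (ssval q) (LS _ Sq)).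
  - move=> x y Hx Hy; rewrite gj => exy.
    have [h|[h|[h|[h|[p [h1 h2]]]]]] := @dean2 _ _ pj pm _ _ iota free a b _ _ exy.
    + apply: (helper2 a) => //; first by rewrite mem_head.
        split; first by left.
        by apply: (least_of _ (x `|` y)) => //; rewrite gj.
      by rewrite gj.
    + apply: (helper2 b) => //; first by rewrite inE mem_head orbT.
        split; first by right; left.
        by apply: (least_of _ (x `|` y)) => //; rewrite gj.
      by rewrite gj.
    + by apply: le_trans (Hx h) _; apply: leUl.
    + by apply: le_trans (Hy h) _; apply: leUr.
    + apply: (helper2 (iota p)).
      * by rewrite !mem_cat map_f ?orbT // mem_enum.
      * split; first by right; right.
        by apply: (least_of _ (x `|` y)); [apply: LS; apply: Sset_iota | rewrite gj].
      * by rewrite gj.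
  - move=> x y Hx Hy; rewrite gm lexI => /andP[h1 h2].
    by rewrite lexI Hx ?Hy.
exists mC; split; last by move=> x; apply: Key.
by apply: mC_ge.
Qed.
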